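(* Let $n\ge1$, $a_{i0}\ge0$, $a_{ij}\ge 0$ and $\pi_i>0$ for $i,j=1,\ldots,n$. For $u\in(0,\infty)^n$ define the matrices $A(u),H(u)\in\mathbb{R}^{n\times n}$ by $$A_{ij}(u)=\delta_{ij}a_{i0}+\delta_{ij}\sum_{k=1}^na_{ik}u_k+a_{ij}u_i,\qquad H_{ij}(u)=\delta_{ij}\pi_iu_i^{-2}.$$ Then for all $z\in\mathbb{R}^n$ and $u\in(0,\infty)^n$, $$z^TH(u)A(u)z\ge\sum_{i=1}^n\pi_ia_{i0}\frac{z_i^2}{u_i^2}+\frac14\sum_{i=1}^n\Big(8\pi_ia_{ii}-\sum_{j=1,\,j\ne i}^n\pi_ja_{ji}\Big)\frac{z_i^2}{u_i}.$$
   Context: $\delta_{ij}$ is the Kronecker symbol. $H(u)$ is the Hessian of $h(u)=\sum_i\pi_i(u_i-\log u_i)$. *)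

(* Defs.v *)
From mathcomp Require Import all_boot all_order all_algebra.
Set Implicit Arguments. Unset Strict Implicit. Unset Printing Implicit Defensive.
Import Order.TTheory GRing.Theory Num.Theory.
Local Open Scope ring_scope.

Definition Amx (R : ringType) (n : nat) (a0 : 'I_n -> R) (a : 'I_n -> 'I_n -> R)
  (u : 'I_n -> R) : 'M[R]_n :=
  \matrix_(i, j) ((i == j)%:R * a0 i + (i == j)%:R * (\sum_k a i k * u k)
                  + a i j * u i).

(* H(u)_{ij} = delta_ij pi_i u_i^{-2}: Hessian of h(u) = sum_i pi_i (u_i - log u_i) *)
Definition Hmx (R : unitRingType) (n : nat) (pi : 'I_n -> R) (u : 'I_n -> R)
  : 'M[R]_n :=
  \matrix_(i, j) ((i == j)%:R * pi i * (u i ^+ 2)^-1).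

(* Main.v *)
Require Import Defs.
From mathcomp Require Import all_boot all_order all_algebra.
From mathcomp Require Import ring lra.
Import Order.TTheory GRing.Theory Num.Theory.
Local Open Scope ring_scope.

Lemma sum_delta (R : ringType) n (F : 'I_n -> R) j :
  \sum_k (j == k)%:R * F k = F j.
Proof.
rewrite (bigD1 j) //= eqxx mul1r big1 ?addr0 // => k hk.
by rewrite eq_sym (negbTE hk) mul0r.
Qed.

Theorem lemma3 (R : realFieldType) (n : nat) (hn : (0 < n)%N)
  (a0 : 'I_n -> R) (a : 'I_n -> 'I_n -> R) (pi : 'I_n -> R)
  (ha0 : forall i, 0 <= a0 i) (ha : forall i j, 0 <= a i j)
  (hpi : forall i, 0 < pi i)
  (z : 'cV[R]_n) (u : 'I_n -> R) (hu : forall i, 0 < u i) :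
  ((z^T *m Hmx pi u *m Amx a0 a u *m z) 0 0)
  >= \sum_i pi i * a0 i * (z i 0 ^+ 2 / u i ^+ 2)
     + 4^-1 * \sum_i (8 * pi i * a i i - \sum_(j | j != i) pi j * a j i)
                      * (z i 0 ^+ 2 / u i).
Proof.
have hu0 : forall i, u i != 0 by move=> i; rewrite gt_eqF.
pose W i j := pi i * a i j * (u j * z i 0 ^+ 2 / u i ^+ 2 + z i 0 * z j 0 / u i).
have key1 : (z^T *m Hmx pi u *m Amx a0 a u *m z) 0 0 =
   \sum_i pi i * a0 i * (z i 0 ^+ 2 / u i ^+ 2) + \sum_i \sum_j W i j.
  rewrite mxE.
  under eq_bigr => k _ do rewrite mxE mulr_suml.
  rewrite exchange_big /= -big_split /=.
  apply: eq_bigr => j _.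
  have -> : (z^T *m Hmx pi u) 0 j = z j 0 * pi j / u j ^+ 2.
    rewrite mxE.
    under eq_bigr => i _ do rewrite !mxE.
    rewrite (bigD1 j) //= eqxx big1 ?addr0; first by rewrite mul1r mulrA.
    by move=> i hi; rewrite (negbTE hi) !mul0r mulr0.
  under eq_bigr => k _ do rewrite mxE.
  transitivity (\sum_k ((j == k)%:R * (z j 0 * pi j / u j ^+ 2 *
        (a0 j + \sum_l a j l * u l) * z j 0)
        + z j 0 * pi j / u j ^+ 2 * (a j k * u j) * z k 0)).
    apply: eq_bigr => k _.
    have [<-|hjk] := eqVneq j k; first by rewrite ?eqxx; ring.
    by rewrite !mul0r !add0r; ring.
  rewrite big_split /= sum_delta mulrDr mulrDl mulr_sumr mulr_suml -addrA.
  congr (_ + _); first by field.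
  rewrite -big_split /=; apply: eq_bigr => k _; rewrite /W; field.
  by rewrite hu0.
have key2 : \sum_i \sum_j W i j =
   \sum_i 2 * pi i * a i i * (z i 0 ^+ 2 / u i) + \sum_i \sum_(j | j != i) W i j.
  rewrite -big_split /=; apply: eq_bigr => i _.
  rewrite (bigD1 i) //=; congr (_ + _); rewrite /W; field.
  by rewrite hu0.
have key3 : \sum_i (\sum_(j | j != i) pi j * a j i) * (z i 0 ^+ 2 / u i) =
    \sum_i \sum_(j | j != i) pi i * a i j * (z j 0 ^+ 2 / u j).
  under eq_bigr => i _ do rewrite mulr_suml big_mkcond /=.
  rewrite exchange_big /=; apply: eq_bigr => i _.
  rewrite [RHS]big_mkcond /=; apply: eq_bigr => j _.
  by rewrite eq_sym; case: (j != i) => //.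
rewrite key1 key2 lerD2l.
under eq_bigr => i _ do rewrite mulrBl.
rewrite sumrB key3 mulrBr.
have -> : 4^-1 * \sum_i 8 * pi i * a i i * (z i 0 ^+ 2 / u i) =
   \sum_i 2 * pi i * a i i * (z i 0 ^+ 2 / u i).
  rewrite mulr_sumr; apply: eq_bigr => i _; field.
  by rewrite hu0.
rewrite lerD2l -subr_ge0 opprK.
rewrite mulr_sumr -big_split /= sumr_ge0 // => i _.
rewrite mulr_sumr -big_split /= sumr_ge0 // => j _.
have -> : W i j + 4^-1 * (pi i * a i j * (z j 0 ^+ 2 / u j)) =
  pi i * a i j / u j * (u j * z i 0 / u i + z j 0 / 2) ^+ 2.
  rewrite /W; field; by rewrite !hu0.
apply: mulr_ge0; last exact: sqr_ge0.
by rewrite divr_ge0 ?mulr_ge0 ?ha // ltW.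
Qed.
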